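(* Let $n\ge 1$, $A\in\mathbb{R}^{n\times n}$ and $C\in\mathbb{R}^{1\times n}$. Assume that $(A,C)$ is an observable pair and that all eigenvalues of $A$ are nonzero. Let $t_1\in\{0,1,2,\ldots\}$ and let $\bar t$ be a positive integer that is not a pathological sampling period of $A$. Then the $n\times n$ matrix with rows $CA^{t_1},CA^{t_1+\bar t},CA^{t_1+2\bar t},\ldots,CA^{t_1+(n-1)\bar t}$ has rank $n$.
   Context: Setting: discrete-time single-output system $x(t+1)=Ax(t)+Bu(t)$, $y(t)=Cx(t)+Du(t)$ with output measured at selected time instances; for time instances $t_1,\ldots,t_l$, the sample-based observability matrix is the matrix with rows $CA^{t_1},\ldots,CA^{t_l}$, and sample-based observability means this matrix has rank $n$. $(A,C)$ is observable if the matrix with rows $C,CA,\ldots,CA^{n-1}$ has rank $n$. A positive integer $h$ is called a pathological sampling period of $A$ if there exist two distinct eigenvalues $\lambda_p\neq\lambda_q$ of $A$, belonging to different Jordan blocks of the Jordan form of $A$, such that $\lambda_p^h=\lambda_q^h$ (equivalently, $|\lambda_p|=|\lambda_q|$ and $\pi/(\phi_q-\phi_p)=h/(2(k_q-k_p))$ for some distinct $k_p,k_q\in\{0,\ldots,h-1\}$, where $\phi_i$ is the phase of $\lambda_i$). *)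

(* Defs.v *)
From HB Require Import structures.
From mathcomp Require Import all_boot all_order all_algebra.
From mathcomp Require Import complex.
Set Implicit Arguments. Unset Strict Implicit. Unset Printing Implicit Defensive.
Import Order.TTheory GRing.Theory Num.Theory.
Local Open Scope ring_scope.

(* Real matrices have entries in an arbitrary real closed field R (e.g. the
   reals); eigenvalues are taken in the complexification R[i]. *)

Definition cplx_mx (R : rcfType) (n : nat) (A : 'M[R]_n) : 'M[R[i]]_n :=
  map_mx (fun x : R => (x%:C)%C) A.

Definition ceigenvalue (R : rcfType) (n : nat) (A : 'M[R]_n) (lambda : R[i]) :=
  eigenvalue (cplx_mx A) lambda.

Definition obsv_mx (R : rcfType) (n : nat) (A : 'M[R]_n.+1) (C : 'rV[R]_n.+1)
  : 'M[R]_n.+1 := \matrix_(i < n.+1) (C *m A ^+ i).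

Definition observable (R : rcfType) (n : nat) (A : 'M[R]_n.+1) (C : 'rV[R]_n.+1) :=
  \rank (obsv_mx A C) = n.+1.

Definition sample_obsv_mx (R : rcfType) (n l : nat) (A : 'M[R]_n.+1)
  (C : 'rV[R]_n.+1) (t : 'I_l -> nat) : 'M[R]_(l, n.+1) :=
  \matrix_(k < l) (C *m A ^+ (t k)).

(* h is a pathological sampling period of A: h > 0 and there are two distinct
   eigenvalues lp <> lq of A (hence lying in different Jordan blocks) with
   lp^h = lq^h. *)
Definition pathological_period (R : rcfType) (n : nat) (A : 'M[R]_n) (h : nat) :=
  (0 < h)%N /\
  exists lp lq : R[i],
    [/\ ceigenvalue A lp, ceigenvalue A lq, lp != lq & lp ^+ h = lq ^+ h].

(* Main.v *)
Require Import Defs.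
From HB Require Import structures.
From mathcomp Require Import all_boot all_order all_algebra.
From mathcomp Require Import complex.
Import Order.TTheory GRing.Theory Num.Theory.
Local Open Scope ring_scope.

Section Aux.
Variable K : fieldType.

Lemma obs_dvd (n : nat) (M : 'M[K]_n.+1) (c : 'rV[K]_n.+1) (g : {poly K}) :
  row_free (\matrix_(i < n.+1) (c *m M ^+ i)) ->
  c *m horner_mx M g = 0 -> char_poly M %| g.
Proof.
move=> rf hg.
set p := char_poly M.
have pnz : p != 0 by rewrite -size_poly_gt0 size_char_poly.
set r := g %% p.
have hr : c *m horner_mx M r = 0.
  move: hg; rewrite {1}(divp_eq g p) rmorphD rmorphM /= Cayley_Hamilton mulr0 add0r.
  by [].
have sr : (size r <= n.+1)%N.
  by have := ltn_modp g p; rewrite pnz size_char_poly ltnS.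
have er : r = \sum_(i < n.+1) r`_i *: 'X^i.
  rewrite -poly_def; apply/polyP => i; rewrite coef_poly.
  by case: ltnP => // hi; rewrite nth_default // (leq_trans sr hi).
set v : 'rV[K]_n.+1 := \row_(i < n.+1) r`_i.
have hv : v *m (\matrix_(i < n.+1) (c *m M ^+ i)) = 0 *m (\matrix_(i < n.+1) (c *m M ^+ i)).
  rewrite mul0mx mulmx_sum_row; transitivity (c *m horner_mx M r); last exact: hr.
  rewrite {1}er rmorph_sum /= mulmx_sumr.
  apply: eq_bigr => i _; rewrite rowK mxE linearZ /= rmorphXn /= horner_mx_X.
  by rewrite scalemxAr.
have v0 := row_free_inj rf hv.
apply/modp_eq0P; rewrite -/r er; apply: big1 => i _.
by move/rowP: v0 => /(_ i); rewrite !mxE => ->; rewrite scale0r.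
Qed.

End Aux.

Lemma key (F : closedFieldType) (h : nat) (hnz : h%:R != 0 :> F) (rs : seq F) :
  forall q : {poly F},
  all (fun z => z != 0) rs ->
  {in rs &, forall z w, z ^+ h = w ^+ h -> z = w} ->
  \prod_(z <- rs) ('X - z%:P) %| q \Po 'X^h ->
  \prod_(z <- rs) ('X - (z ^+ h)%:P) %| q.
Proof.
elim: rs => [|z rs IH] q; first by move=> *; rewrite big_nil dvd1p.
move=> /= /andP[z0 allrs] inj.
rewrite !big_cons => hd.
have rz : root (q \Po 'X^h) z.
  by move: (dvdp_trans (dvdp_mulr _ (dvdpp ('X - z%:P))) hd); rewrite dvdp_XsubCl.
have : root q (z ^+ h) by move: rz; rewrite /root horner_comp hornerXn.
case/factor_theorem => q1 qE; rewrite qE in hd *.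
set u := \sum_(i < h) 'X ^+ (h.-1 - i) * z%:P ^+ i.
have eu : 'X^h - (z ^+ h)%:P = ('X - z%:P) * u by rewrite rmorphXn /= subrXX.
have uz : u.[z] != 0.
  rewrite /u horner_sum.
  have -> : \sum_(i < h) ('X ^+ (h.-1 - i) * z%:P ^+ i).[z] = \sum_(i < h) z ^+ h.-1.
    apply: eq_bigr => i _; rewrite hornerM horner_exp hornerX -rmorphXn hornerC -exprD.
    by rewrite subnK // -ltnS (leq_trans (ltn_ord i)) // leqSpred.
  rewrite sumr_const card_ord -mulr_natr mulf_neq0 //.
  by rewrite expf_neq0.
have eux x : x ^+ h - z ^+ h = (x - z) * u.[x].
  by move: (congr1 (horner^~ x) eu); rewrite hornerD hornerN hornerXn hornerC hornerM hornerD hornerN hornerX hornerC.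
rewrite mulrC; apply: dvdp_mul; last exact: dvdpp.
apply: IH => //.
  by move=> a b ha hb; apply: inj; rewrite inE ?ha ?hb orbT.
move: hd; rewrite comp_polyM comp_polyB comp_polyX comp_polyC eu mulrCA dvdp_mul2l; last first.
  by rewrite polyXsubC_eq0.
rewrite Gauss_dvdpl //; apply/Pdiv.ClosedField.coprimepP => x; rewrite root_prod_XsubC => xrs.
apply/negP => /eqP ux0.
have : x ^+ h = z ^+ h by apply/eqP; rewrite -subr_eq0 eux ux0 mulr0.
move/inj; rewrite !inE xrs eqxx orbT => /(_ isT isT) xz.
by move: uz; rewrite -xz ux0 eqxx.
Qed.

Theorem theorem2 (R : rcfType) (n : nat) (A : 'M[R]_n.+1) (C : 'rV[R]_n.+1)
  (t1 tbar : nat) :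
  observable A C ->
  (forall lambda : R[i], ceigenvalue A lambda -> lambda != 0) ->
  (0 < tbar)%N ->
  ~ pathological_period A tbar ->
  \rank (sample_obsv_mx A C (fun k : 'I_n.+1 => (t1 + k * tbar)%N)) = n.+1.
Proof.
move=> obs nz0 hpos npath.
pose f := real_complex R.
set M := cplx_mx A.
set c := map_mx f C.
have mapS : map_mx f (sample_obsv_mx A C (fun k : 'I_n.+1 => (t1 + k * tbar)%N))
   = \matrix_(k < n.+1) (c *m M ^+ (t1 + k * tbar)).
  apply/row_matrixP => k; rewrite -map_row !rowK map_mxM rmorphXn.
  by [].
have mapO : map_mx f (obsv_mx A C) = \matrix_(i < n.+1) (c *m M ^+ i).
  apply/row_matrixP => k; rewrite -map_row !rowK map_mxM rmorphXn.
  by [].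
have rfO : row_free (\matrix_(i < n.+1) (c *m M ^+ i)).
  by rewrite /row_free -mapO mxrank_map obs.
rewrite -(mxrank_map f) mapS.
set S := \matrix_(k < n.+1) _.
apply/eqP; change (row_free S).
apply/negPn/negP => nrf.
have : kermx S != 0 by rewrite kermx_eq0.
case/rowV0Pn => w; rewrite sub_kermx => /eqP wS wnz.
pose q : {poly R[i]} := \poly_(k < n.+1) w 0 (inord k).
have qnz : q != 0.
  apply: contra wnz => /eqP q0; apply/eqP/rowP => k.
  have := congr1 (fun p : {poly R[i]} => p`_k) q0.
  by rewrite coef_poly ltn_ord inord_val coef0 !mxE => ->.
have sq : (size q <= n.+1)%N by apply: size_poly.
have hg : c *m horner_mx M ('X^t1 * (q \Po 'X^tbar)) = 0.
  rewrite -wS [in RHS]mulmx_sum_row rmorphM /= rmorphXn /= horner_mx_X.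
  rewrite /q poly_def.
  rewrite (linear_sum (comp_poly 'X^tbar)) rmorph_sum /= mulr_sumr mulmx_sumr.
  apply: eq_bigr => k _; rewrite rowK inord_val.
  rewrite comp_polyZ linearZ /= comp_Xn_poly -exprM.
  rewrite rmorphXn /= horner_mx_X -scalerAr -scalemxAr -exprD mulnC.
  by [].
have dv := @obs_dvd _ _ _ _ _ rfO hg.
set p := char_poly M in dv.
have eig z : root p z -> z != 0.
  by move=> rz; apply: nz0; rewrite /ceigenvalue eigenvalue_root_char.
have cop : coprimep p 'X^t1.
  apply: coprimep_expr; have := coprimep_XsubC p 0.
  rewrite polyC0 subr0 => ->; apply/negP => /eig; rewrite eqxx.
  by [].
rewrite Gauss_dvdpr // in dv.
have [rs prs] := closed_field_poly_normal p.
have mp : p \is monic by apply: char_poly_monic.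
rewrite (monicP mp) scale1r in prs.
have hnz : (tbar%:R : R[i]) != 0 by rewrite pnatr_eq0 -lt0n.
have := @key _ tbar hnz rs q.
rewrite -prs => /(_ _ _ dv) H.
have : \prod_(z <- rs) ('X - (z ^+ tbar)%:P) %| q.
  apply: H.
    apply/allP => z zrs; apply: eig; rewrite prs root_prod_XsubC.
    by [].
  move=> z w' zrs wrs ezw; apply/eqP/negPn/negP => nzw; apply: npath; split => //.
  exists z, w'; split => //; rewrite /ceigenvalue eigenvalue_root_char -/M -/p prs root_prod_XsubC.
    by [].
  by [].
move/(dvdp_leq qnz); rewrite size_prod_XsubC.
have : size p = n.+2 by rewrite size_char_poly.
rewrite {1}prs size_prod_XsubC => [[->]] => /leq_trans /(_ sq).
by rewrite ltnn.
Qed.
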